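(* Let $\sigma'\in\Sigma_{E_N}$, $\beta\in[0,\infty]$ and $\kappa\ge0$. Then $\mu_{N,\beta,\kappa}(\{\sigma\in\Sigma_{E_N}:\sigma'\le\sigma\})\le\varphi_{\beta,\kappa}(\sigma')$.
   Context: $G=\mathbb Z_n$, $\rho$ a faithful unitary one-dimensional representation. On $\mathbb Z^4$, $E_N,P_N$ are the oriented edges/plaquettes with vertices in $B_N=[-N,N]^4\cap\mathbb Z^4$; $\partial p$ the oriented boundary edges of $p$. $\Sigma_{E_N}$: $\sigma:E_N\to G$ with $\sigma_{-e}=-\sigma_e$; $(d\sigma)_p=\sum_{e\in\partial p}\sigma_e$. For $r\ge0$, $\varphi_r(g)=e^{r(\mathrm{Re}\rho(g)-1)}$, $\varphi_\infty(g)=\mathbb 1_{g=0}$; $\varphi_{\beta,\kappa}(\sigma)=\prod_{e\in E_N}\varphi_\kappa(\sigma_e)\prod_{p\in P_N}\varphi_\beta((d\sigma)_p)$. $\mu_{N,\beta,\kappa}(\sigma)=\varphi_{\beta,\kappa}(\sigma)/\sum_{\sigma''\in\Sigma_{E_N}}\varphi_{\beta,\kappa}(\sigma'')$ (for $\beta<\infty$ this is $\propto\exp(\beta\sum_p\rho((d\sigma)_p)+\kappa\sum_e\rho(\sigma_e))$; for $\beta=\infty$ it is supported on $d\sigma=0$). Partial order: $\sigma'\le\sigma$ iff $\sigma'=\sigma|_{\mathrm{supp}\,\sigma'}$ and $d\sigma'=(d\sigma)|_{\mathrm{supp}\,d\sigma'}$. *)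

(* Defs.v *)
From mathcomp Require Import all_boot all_order all_algebra.
From mathcomp Require Import reals constructive_ereal ereal.
From mathcomp.analysis Require Import sequences exp.
From mathcomp Require Import complex.
Set Implicit Arguments.
Unset Strict Implicit.
Unset Printing Implicit Defensive.
Import Order.TTheory GRing.Theory Num.Theory.
Local Open Scope ring_scope.

(* Vertices of B_N = [-N,N]^4 ∩ Z^4: coordinate c : 'I_(2N+1) stands for c - N. *)
Definition vert (N : nat) := {ffun 'I_4 -> 'I_(N.*2.+1)}.

(* x + e_j  (only used when x_j < 2N, i.e. when it stays in the box) *)
Definition shift N (x : vert N) (j : 'I_4) : vert N :=
  [ffun i => if i == j then inord (x i).+1 else x i].

(* Oriented edges E_N: a triple (x, j, b) denotes the edge x -> x + e_j if
   b = true (positively oriented) and its reverse x + e_j -> x if b = false.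
   Both endpoints lie in B_N iff x_j < 2N. *)
Definition edge_valid N (t : vert N * 'I_4 * bool) : bool := (t.1.1 t.1.2 < N.*2)%N.
Definition edge N := {t : vert N * 'I_4 * bool | edge_valid t}.

Definition eflip N (t : vert N * 'I_4 * bool) : vert N * 'I_4 * bool :=
  (t.1.1, t.1.2, ~~ t.2).

(* Oriented plaquettes P_N: (x, j, k, b) with j < k; b = true is the
   positively oriented plaquette x + {a e_j + c e_k : a, c in [0,1]},
   b = false its negative.  All four vertices lie in B_N iff x_j, x_k < 2N. *)
Definition plaq_valid N (p : vert N * 'I_4 * 'I_4 * bool) : bool :=
  [&& (p.1.1.2 < p.1.2)%N, (p.1.1.1 p.1.1.2 < N.*2)%N & (p.1.1.1 p.1.2 < N.*2)%N].
Definition plaq N := {p : vert N * 'I_4 * 'I_4 * bool | plaq_valid p}.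

Definition bdry N (p : plaq N) : seq (vert N * 'I_4 * bool) :=
  let: (x, j, k, b) := val p in
  let pos := [:: (x, j, true); (shift x j, k, true);
                 (shift x k, j, false); (x, k, false)] in
  if b then pos else map (@eflip N) pos.

Section Model.
Variables (n : nat) (N : nat).
Local Notation G := 'Z_n.

(* value of sigma at an (edge) triple; 0 if the triple is not an edge of E_N *)
Definition sig_at (s : {ffun edge N -> G}) (t : vert N * 'I_4 * bool) : G :=
  oapp s 0 (insub t).

Definition is_config (s : {ffun edge N -> G}) : bool :=
  [forall e : edge N, sig_at s (eflip (val e)) == - s e].

Definition dsig (s : {ffun edge N -> G}) (p : plaq N) : G :=
  \sum_(t <- bdry p) sig_at s t.

Definition cfg_le (s' s : {ffun edge N -> G}) : bool :=
  [forall e : edge N, (s' e != 0) ==> (s e == s' e)] &&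
  [forall p : plaq N, (dsig s' p != 0) ==> (dsig s p == dsig s' p)].

Variables (R : realType) (rho : G -> R[i]).

(* phi_r, r in [0, +oo] (the -oo branch is never used) *)
Definition phi (r : \bar R) (g : G) : R :=
  match r with
  | r%:E => expR (r * (complex.Re (rho g) - 1))
  | +oo%E => (g == 0)%:R
  | -oo%E => 0
  end.

Definition phi_cfg (beta : \bar R) (kappa : R) (s : {ffun edge N -> G}) : R :=
  (\prod_(e : edge N) phi kappa%:E (s e)) *
  (\prod_(p : plaq N) phi beta (dsig s p)).

Definition mu (beta : \bar R) (kappa : R) (A : pred {ffun edge N -> G}) : R :=
  (\sum_(s | is_config s && A s) phi_cfg beta kappa s) /
  (\sum_(s | is_config s) phi_cfg beta kappa s).

End Model.

(* Main.v *)
Require Import Defs.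
From mathcomp Require Import all_boot all_order all_algebra.
From mathcomp Require Import reals constructive_ereal ereal.
From mathcomp.analysis Require Import sequences exp.
From mathcomp Require Import complex.
Import Order.TTheory GRing.Theory Num.Theory.
Local Open Scope ring_scope.

Section Aux.
Variables (n N : nat).

Lemma ffunDE (t s : {ffun edge N -> 'Z_n}) x : (t + s) x = t x + s x :> 'Z_n.
Proof. by rewrite ffunE. Qed.

Lemma sig_atD (t s : {ffun edge N -> 'Z_n}) x :
  sig_at (t + s) x = sig_at t x + sig_at s x.
Proof. rewrite /sig_at; case: insubP => [e _ _|_] /=; by rewrite ?ffunE ?addr0. Qed.

Lemma dsigD (t s : {ffun edge N -> 'Z_n}) p :
  dsig (t + s) p = dsig t p + dsig s p.
Proof. rewrite /dsig -big_split /=; apply: eq_bigr => x _; exact: sig_atD. Qed.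

Lemma config_sub (t s : {ffun edge N -> 'Z_n}) :
  is_config (t + s) -> is_config s -> is_config t.
Proof.
move=> /forallP H1 /forallP H2; apply/forallP => e.
have := H1 e; have := H2 e; rewrite sig_atD ffunE => /eqP -> /eqP.
by move=> /(canRL (addrK _)) ->; rewrite opprD addrK.
Qed.
End Aux.

Theorem mainTheorem9 (n : nat) (hn : (1 < n)%N) (R : realType)
  (rho : 'Z_n -> R[i])
  (rho_hom : forall a b : 'Z_n, rho (a + b) = rho a * rho b)
  (rho_unitary : forall g : 'Z_n, `|rho g| = 1)
  (rho_faithful : injective rho)
  (N : nat) (s' : {ffun edge N -> 'Z_n}) (hs' : is_config s')
  (beta : \bar R) (hbeta : (0 <= beta)%E) (kappa : R) (hkappa : 0 <= kappa) :
  mu rho beta kappa (fun s => cfg_le s' s) <= phi_cfg rho beta kappa s'.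
Proof.
have rho0 : rho 0 = 1.
  have h := rho_hom 0 0; rewrite addr0 in h.
  have nz : rho 0 != 0 by rewrite -normr_eq0 rho_unitary oner_neq0.
  by apply: (mulIf nz); rewrite mul1r -h.
have phi0 : forall r : \bar R, (0 <= r)%E -> phi rho r 0 = 1.
  case=> [r||] //= _.
  have -> : complex.Re (rho 0) = 1 by rewrite rho0.
  by rewrite subrr mulr0 expR0.
have phige0 : forall r g, 0 <= phi rho r g.
  by case=> [r||] g //=; rewrite ?expR_ge0 ?ler0n.
have cfgge0 : forall s : {ffun edge N -> 'Z_n}, 0 <= phi_cfg rho beta kappa s.
  by move=> s; rewrite /phi_cfg; apply: mulr_ge0; apply: prodr_ge0.
have hk : (0 <= kappa%:E)%E by rewrite lee_fin.
have fact : forall t : {ffun edge N -> 'Z_n}, cfg_le s' (t + s') ->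
    phi_cfg rho beta kappa (t + s') = phi_cfg rho beta kappa s' * phi_cfg rho beta kappa t.
  move=> t /andP[/forallP He /forallP Hp].
  rewrite /phi_cfg mulrACA -!big_split; congr (_ * _); apply: eq_bigr => x _.
    rewrite ffunDE; case: (eqVneq (s' x) 0) => [->|nz].
      by rewrite addr0 phi0 //; exact/esym/mul1r.
    have /eqP := implyP (He x) nz; rewrite ffunDE.
    by move=> /(canRL (addrK _)); rewrite subrr => ->; rewrite add0r phi0 //; exact/esym/mulr1.
  rewrite dsigD; case: (eqVneq (dsig s' x) 0) => [->|nz].
    by rewrite addr0 phi0 //; exact/esym/mul1r.
  have /eqP := implyP (Hp x) nz.
  by rewrite dsigD => /(canRL (addrK _)); rewrite subrr => ->; rewrite add0r phi0 //; exact/esym/mulr1.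
set Z := \sum_(s : {ffun edge N -> 'Z_n} | is_config s) phi_cfg rho beta kappa s.
have Hs : \sum_(s | is_config s && cfg_le s' s) phi_cfg rho beta kappa s
          <= phi_cfg rho beta kappa s' * Z.
  rewrite (reindex_inj (addIr s')) /= /Z mulr_sumr.
  rewrite [X in _ <= X]big_mkcond [X in X <= _]big_mkcond /=.
  apply: ler_sum => t _.
  case: (boolP (is_config (t + s') && cfg_le s' (t + s'))) => [/andP[c l]|_].
    by rewrite (@config_sub _ _ _ _ c hs') fact.
  by case: ifP => _ //; rewrite mulr_ge0.
rewrite /mu -/Z.
have Z0 : 0 <= Z by rewrite sumr_ge0.
case: (ltrgt0P Z) Z0 => [Zp _| //|->]; last by rewrite invr0 mulr0 => _; rewrite cfgge0.
by rewrite ler_pdivrMr.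
Qed.
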